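(* Let $\mathcal M$ be a miss-MDP whose missingness function $M$ is simple MAR, and let the estimate $\widehat M$ be computed from a dataset $\mathcal D$ by the AsMAR rule described in the context. Then: (i) For every precision $\varepsilon>0$ and confidence threshold $\delta\in(0,1)$ there exists a number $n^*\in\mathbb N$ such that, if $\mathcal D$ consists of $n^*$ histories generated independently under the fair behaviour policy $\pi_b$, then with probability at least $\delta$ (over the generation of $\mathcal D$) we have $|\widehat M(z\mid s)-M(z\mid s)|\le\varepsilon$ for all states $s\in S$ reachable in $\mathcal M$ and all observations $z\in Z$. (ii) Dually, for every dataset size (number of histories) and every confidence threshold $\delta\in(0,1)$ there exists $\varepsilon>0$ such that, with probability at least $\delta$ over the generation of $\mathcal D$, $|\widehat M(z\mid s)-M(z\mid s)|\le\varepsilon$ for all reachable $s\in S$ and all $z\in Z$.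
   Context: A missingness-MDP (miss-MDP) is a tuple $\mathcal M=(S,A,T,\iota,\varrho,Z,M,\gamma)$ with finite factored state space $S=\prod_{i\in I}S_i$ where $I=\{1,\dots,n\}$ is the set of feature indices, finite action set $A$, transition function $T:S\times A\to\Delta(S)$, initial distribution $\iota\in\Delta(S)$, reward $\varrho:S\times A\to\mathbb R$, discount factor $\gamma\in[0,1)$, observation space $Z=\prod_{i\in I}(S_i\cup\{\bot\})$ ($\bot$ means ''missing''), and missingness function $M:S\to\Delta(Z)$ such that for all $s\in S$, all $z$ in the support of $M(s)$ and all $i\in I$, $z_i\in\{s_i,\bot\}$. Write $M(z\mid s)=M(s)(z)$. Let $R=\{0,1\}^n$ and $f_R:Z\to R$ with $f_R(z)_i=0$ iff $z_i=\bot$. A run of $\mathcal M$ under a policy: $s^{(0)}\sim\iota$, $z^{(t)}\sim M(s^{(t)})$, action $a^{(t)}$ chosen by the policy from past observations/actions, $s^{(t+1)}\sim T(s^{(t)},a^{(t)})$; its history is $(z^{(0)},a^{(0)},z^{(1)},a^{(1)},\dots)$. A state is reachable if it is visited with positive probability under some policy. A dataset $\mathcal D=(h_1,\dots,h_k)$ consists of finite histories generated independently under a fixed behaviour policy $\pi_b$ that is fair: every reachable state is visited with positive probability within each generated history. For $z\in Z$, $\#_{\mathcal D}(z)$ is the total number of occurrences of $z$ as an observation in the histories of $\mathcal D$, and $\#_{\mathcal D}(Z')=\sum_{z\in Z'}\#_{\mathcal D}(z)$ for $Z'\subseteq Z$. Let $I_{\text{always}}=\{i\in I:\forall s\in S,\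 \Pr_{z\sim M(s)}(z_i=\bot)=0\}$. $M$ is simple MAR iff for all $s,s'\in S$ with $s_i=s'_i$ for all $i\in I_{\text{always}}$ and all $r\in R$: $\Pr_{z\sim M(s)}(f_R(z)=r)=\Pr_{z\sim M(s')}(f_R(z)=r)$. AsMAR rule: let $\hat I_{\text{always}}=\{i\in I:\#_{\mathcal D}(\{z\in Z: z_i=\bot\})=0\}$. For $s\in S$ and $r\in R$ let $Z_s^r=\{z\in Z:\forall i\in I,\ (i\in\hat I_{\text{always}}\Rightarrow z_i=s_i)\text{ and }(r_i=0\Rightarrow z_i=\bot)\}$ and $\#_{\mathcal D}(s,r)=\#_{\mathcal D}(Z_s^r)$. Then $\widehat M(z\mid s)=\#_{\mathcal D}(s,f_R(z))\big/\sum_{r\in R}\#_{\mathcal D}(s,r)$. *)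

(* Defs.v *)
From HB Require Import structures.
From mathcomp Require Import all_boot all_order all_algebra.
From mathcomp Require Import boolp reals.
Set Implicit Arguments. Unset Strict Implicit. Unset Printing Implicit Defensive.
Import Order.TTheory GRing.Theory Num.Theory.
Local Open Scope ring_scope.

Section MissMDP.
Variables (R : realType) (n : nat) (Sf : 'I_n -> finType) (A : finType).

Definition state := {dffun forall i : 'I_n, Sf i}.
(* observation space Z = prod_i (S_i u {bot}); None encodes bot *)
Definition obs := {dffun forall i : 'I_n, option (Sf i)}.
(* missingness patterns R = {0,1}^n; true = observed (1), false = missing (0) *)
Definition pattern := {ffun 'I_n -> bool}.
Definition fR (z : obs) : pattern := [ffun i => z i != None].

Definition is_dist (X : finType) (p : {ffun X -> R}) :=
  (forall x, 0 <= p x) /\ \sum_x p x = 1.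

Record missMDP := MissMDP {
  trans : state -> A -> {ffun state -> R};
  init : {ffun state -> R};
  reward : state -> A -> R;
  discount : R;
  missf : state -> {ffun obs -> R} }.

Definition valid_missMDP (m : missMDP) :=
  [/\ forall s a, is_dist (trans m s a),
      is_dist (init m),
      0 <= discount m < 1,
      forall s, is_dist (missf m s) &
      forall s z, 0 < missf m s z ->
        forall i, z i = None \/ z i = Some (s i)].

(* history-dependent randomised policy: past (z,a) pairs, current z *)
Definition policy := seq (obs * A) -> obs -> {ffun A -> R}.
Definition valid_policy (pol : policy) := forall h z, is_dist (pol h z).

Definition step := (state * obs * A)%type.

Fixpoint run_aux (m : missMDP) (pol : policy) (sp : state) (ap : A)
    (h : seq (obs * A)) (tr : seq step) : R :=
  match tr with
  | [::] => 1
  | (s, z, a) :: tr' =>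
      trans m sp ap s * missf m s z * pol h z a *
      run_aux m pol s a (rcons h (z, a)) tr'
  end.

Definition run_prob (m : missMDP) (pol : policy) (tr : seq step) : R :=
  match tr with
  | [::] => 1
  | (s, z, a) :: tr' =>
      init m s * missf m s z * pol [::] z a * run_aux m pol s a [:: (z, a)] tr'
  end.

Definition prob_at (m : missMDP) (pol : policy) (t : nat) (s : state) : R :=
  \sum_(tr : t.+1.-tuple step | (tnth tr ord_max).1.1 == s) run_prob m pol tr.

Definition reachable (m : missMDP) (s : state) : Prop :=
  exists pol : policy, valid_policy pol /\ exists t, 0 < prob_at m pol t s.

(* histories have L+1 observations (time steps 0..L); fairness *)
Definition fair (m : missMDP) (pol : policy) (L : nat) : Prop :=
  forall s, reachable m s ->
    0 < \sum_(tr : L.+1.-tuple step | has (fun x : step => x.1.1 == s) tr)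
          run_prob m pol tr.

Definition I_always (m : missMDP) : {set 'I_n} :=
  [set i | [forall s, (\sum_(z : obs | z i == None) missf m s z) == 0]].

Definition simple_MAR (m : missMDP) : Prop :=
  forall s s' : state, (forall i, i \in I_always m -> s i = s' i) ->
    forall r : pattern,
      \sum_(z : obs | fR z == r) missf m s z = \sum_(z : obs | fR z == r) missf m s' z.

Definition history_of (tr : seq step) : seq (obs * A) :=
  [seq (x.1.2, x.2) | x <- tr].

Definition cnt_obs (D : seq (seq (obs * A))) (z : obs) : nat :=
  sumn [seq count (fun p : obs * A => p.1 == z) h | h <- D].

Definition cnt_set (D : seq (seq (obs * A))) (P : pred obs) : nat :=
  (\sum_(z : obs | P z) cnt_obs D z)%N.

Definition Ihat (D : seq (seq (obs * A))) : {set 'I_n} :=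
  [set i | cnt_set D (fun z : obs => z i == None) == 0%N].

Definition Zsr (D : seq (seq (obs * A))) (s : state) (r : pattern) : pred obs :=
  fun z => [forall i, ((i \in Ihat D) ==> (z i == Some (s i))) &&
                      ((~~ r i) == (z i == None))].

Definition cnt_sr D s r : nat := cnt_set D (Zsr D s r).

Definition consistent (s : state) (z : obs) : bool :=
  [forall i, (z i == None) || (z i == Some (s i))].

Definition Mhat (D : seq (seq (obs * A))) (s : state) (z : obs) : R :=
  if consistent s z then
    (cnt_sr D s (fR z))%:R / (\sum_(r : pattern) cnt_sr D s r)%:R
  else 0.

Definition prob_good (m : missMDP) (pol : policy) (L k : nat) (eps : R) : R :=
  \sum_(D : k.-tuple (L.+1.-tuple step) |
        [forall s : state, `[< reachable m s >] ==>
           [forall z : obs,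
              `| Mhat [seq history_of (tval tr) | tr <- tval D] s z - missf m s z |
                <= eps]])
     \prod_(j < k) run_prob m pol (tnth D j).

End MissMDP.

(* Main.v *)
Require Import Defs.
From HB Require Import structures.
From mathcomp Require Import all_boot all_order all_algebra.
From mathcomp Require Import boolp reals.
From mathcomp Require Import ring lra.
Import Order.TTheory GRing.Theory Num.Theory.
Local Open Scope ring_scope.
Set Implicit Arguments. Unset Strict Implicit. Unset Printing Implicit Defensive.

Section Tup.
Variable R : realType.

Lemma sum_tuple_ffun (T : finType) k (F : k.-tuple T -> R) :
  \sum_(t : k.-tuple T) F t = \sum_(f : {ffun 'I_k -> T}) F [tuple f i | i < k].
Proof.
apply: (reindex (fun f : {ffun 'I_k -> T} => [tuple f i | i < k])).
exists (fun t : k.-tuple T => [ffun i => tnth t i]) => [f _|t _].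
  by apply/ffunP => i; rewrite ffunE tnth_mktuple.
by apply: eq_from_tnth => i; rewrite tnth_mktuple ffunE.
Qed.

Lemma prod_sum_tuple (T : finType) k (f : 'I_k -> T -> R) :
  \sum_(t : k.-tuple T) \prod_(j < k) f j (tnth t j) = \prod_(j < k) \sum_(x : T) f j x.
Proof.
rewrite bigA_distr_bigA sum_tuple_ffun; apply: eq_bigr => g _.
by apply: eq_bigr => j _; rewrite tnth_mktuple.
Qed.

Lemma sum_tuple_cons (T : finType) k (F : k.+1.-tuple T -> R) :
  \sum_(t : k.+1.-tuple T) F t = \sum_(x : T) \sum_(t : k.-tuple T) F [tuple of x :: t].
Proof.
rewrite pair_big /=.
apply: (reindex (fun p : T * k.-tuple T => [tuple of p.1 :: p.2])).
exists (fun t : k.+1.-tuple T => (thead t, [tuple of behead t])) => [[x t] _|t _].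
  by rewrite /= theadE; congr pair; apply: val_inj.
by rewrite /= -tuple_eta.
Qed.
End Tup.

Section Prod.
Variables (R : realType) (X : finType) (w : X -> R).
Hypothesis w0 : forall x, 0 <= w x.
Hypothesis w1 : \sum_x w x = 1.

Definition W k (D : k.-tuple X) := \prod_(j < k) w (tnth D j).

Lemma W_ge0 k D : 0 <= @W k D.
Proof. by apply: prodr_ge0 => j _. Qed.

Lemma sumW k : \sum_(D : k.-tuple X) W D = 1.
Proof. by rewrite /W (prod_sum_tuple (fun _ => w)) w1 big1. Qed.

Lemma EW1 k (j : 'I_k) (g : X -> R) :
  \sum_(D : k.-tuple X) W D * g (tnth D j) = \sum_x w x * g x.
Proof.
pose u (i : 'I_k) x := w x * (if i == j then g x else 1).
have -> : \sum_(D : k.-tuple X) W D * g (tnth D j)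
        = \sum_(D : k.-tuple X) \prod_(i < k) u i (tnth D i).
  apply: eq_bigr => D _; rewrite /u big_split /=; congr (_ * _).
  rewrite (bigD1 j) //= eqxx big1 ?mulr1 // => i /negbTE ->; done.
rewrite prod_sum_tuple (bigD1 j) //= [X in _ * X]big1 ?mulr1.
  by apply: eq_bigr => x _; rewrite /u eqxx.
by move=> i /negbTE hij; rewrite /u hij; under eq_bigr => x _ do rewrite mulr1; exact: w1.
Qed.

Lemma EW2 k (j l : 'I_k) (g h : X -> R) : j != l ->
  \sum_(D : k.-tuple X) W D * (g (tnth D j) * h (tnth D l))
   = (\sum_x w x * g x) * (\sum_x w x * h x).
Proof.
move=> jl.
pose u (i : 'I_k) x := w x * (if i == j then g x else 1) * (if i == l then h x else 1).
have -> : \sum_(D : k.-tuple X) W D * (g (tnth D j) * h (tnth D l))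
        = \sum_(D : k.-tuple X) \prod_(i < k) u i (tnth D i).
  apply: eq_bigr => D _; rewrite /u !big_split /= -mulrA; congr (_ * (_ * _)).
    rewrite (bigD1 j) //= eqxx big1 ?mulr1 // => i /negbTE ->; done.
  rewrite (bigD1 l) //= eqxx big1 ?mulr1 // => i /negbTE ->; done.
rewrite prod_sum_tuple (bigD1 j) //= (bigD1 l) /=; last by rewrite eq_sym.
rewrite [X in _ * (_ * X)]big1 ?mulr1.
  congr (_ * _); apply: eq_bigr => x _; rewrite /u eqxx.
    by rewrite (negbTE jl) mulr1.
  by rewrite eq_sym (negbTE jl) mulr1.
move=> i /andP[il ij]; rewrite /u.
by rewrite (negbTE ij) (negbTE il); under eq_bigr => x _ do rewrite !mulr1; exact: w1.
Qed.

Lemma cheb k (Y : X -> R) (c b : R) : 0 < b -> (0 < k)%N ->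
  \sum_x w x * Y x = 0 -> (forall x, `|Y x| <= c) ->
  \sum_(D : k.-tuple X) W D * (if b * k%:R < `|\sum_(j < k) Y (tnth D j)| then 1 else 0)
    <= c ^+ 2 / (b ^+ 2 * k%:R).
Proof.
move=> b0 k0 EY Yc.
have kR : 0 < k%:R :> R by rewrite ltr0n.
have bk : 0 < b * k%:R by rewrite mulr_gt0.
pose S (D : k.-tuple X) := \sum_(j < k) Y (tnth D j).
apply: (@le_trans _ _ (\sum_(D : k.-tuple X) W D * (S D ^+ 2 / (b * k%:R) ^+ 2))).
  apply: ler_sum => D _; apply: ler_wpM2l; first exact: W_ge0.
  case: ifP => h; last by rewrite divr_ge0 ?sqr_ge0.
  rewrite ler_pdivlMr ?exprn_gt0 // mul1r.
  have h' : b * k%:R <= `|S D| := ltW h.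
  rewrite -[S D ^+ 2]real_normK ?num_real //; nra.
under eq_bigr do rewrite mulrA.
rewrite -mulr_suml.
have E2 : \sum_(D : k.-tuple X) W D * S D ^+ 2 <= k%:R * c ^+ 2.
  have -> : \sum_(D : k.-tuple X) W D * S D ^+ 2 =
      \sum_(j < k) \sum_(l < k) \sum_(D : k.-tuple X) W D * (Y (tnth D j) * Y (tnth D l)).
    transitivity (\sum_(D : k.-tuple X) \sum_(j < k) \sum_(l < k)
                    W D * (Y (tnth D j) * Y (tnth D l))).
      apply: eq_bigr => D _.
      rewrite /S expr2 mulr_suml mulr_sumr; apply: eq_bigr => j _.
      by rewrite !mulr_sumr; reflexivity.
    rewrite exchange_big /=; apply: eq_bigr => j _.
    by rewrite exchange_big.
  have -> : k%:R * c ^+ 2 = \sum_(j < k) c ^+ 2 by rewrite sumr_const card_ord mulr_natl.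
  apply: ler_sum => j _; rewrite (bigD1 j) //= [X in _ + X]big1 ?addr0.
    rewrite (_ : \sum_(D : k.-tuple X) W D * (Y (tnth D j) * Y (tnth D j)) =
                 \sum_x w x * (Y x * Y x)); last exact: (EW1 j (fun x => Y x * Y x)).
    apply: (@le_trans _ _ (\sum_x w x * c ^+ 2)); last by rewrite -mulr_suml w1 mul1r.
    apply: ler_sum => x _; apply: ler_wpM2l => //.
    have := Yc x; rewrite ler_norml => /andP[h1 h2]; nra.
  by move=> l lj; rewrite EW2 1?eq_sym // EY mul0r.
apply: (@le_trans _ _ (k%:R * c ^+ 2 / (b * k%:R) ^+ 2)).
  by apply: ler_wpM2r => //; rewrite invr_ge0 sqr_ge0.
have bn : b != 0 by rewrite gt_eqF.
have kn : k%:R != 0 :> R by rewrite gt_eqF.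
rewrite (_ : k%:R * c ^+ 2 / (b * k%:R) ^+ 2 = c ^+ 2 / (b ^+ 2 * k%:R)) //.
by field; rewrite kn bn.
Qed.
End Prod.
Set Implicit Arguments. Unset Strict Implicit. Unset Printing Implicit Defensive.

Lemma mul_gt0_split (R : realType) (a b : R) : 0 <= a -> 0 <= b -> 0 < a * b -> 0 < a /\ 0 < b.
Proof.
move=> a0 b0 ab; split; rewrite lt_def ?a0 ?b0 andbT.
  by apply: contraTneq ab => ->; rewrite mul0r ltxx.
by apply: contraTneq ab => ->; rewrite mulr0 ltxx.
Qed.

Lemma sum_tuple0 (R : realType) (T : finType) (F : 0.-tuple T -> R) :
  \sum_(t : 0.-tuple T) F t = F [tuple].
Proof.
rewrite (big_pred1 [tuple]) // => t; rewrite /= [t]tuple0; exact/esym/eqP.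
Qed.

Section MDP.
Variables (R : realType) (n : nat) (Sf : 'I_n -> finType) (A : finType).
Variables (m : missMDP R Sf A) (pol : policy R Sf A).
Hypothesis htr : forall s a, is_dist (trans m s a).
Hypothesis hmiss : forall s, is_dist (missf m s).
Hypothesis hpol : valid_policy pol.

Local Notation step := (step Sf A).
Local Notation state := (state Sf).
Local Notation obs := (obs Sf).

Definition Fr (d : state -> R) (h : seq (obs * A)) (tr : seq step) : R :=
  match tr with
  | [::] => 1
  | x :: tr' => d x.1.1 * missf m x.1.1 x.1.2 * pol h x.1.2 x.2 *
      run_aux m pol x.1.1 x.2 (rcons h (x.1.2, x.2)) tr'
  end.

Lemma run_auxE sp ap h tr : run_aux m pol sp ap h tr = Fr (trans m sp ap) h tr.
Proof. by case: tr => [|[[s z] a] tr]. Qed.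

Lemma run_probE tr : run_prob m pol tr = Fr (init m) [::] tr.
Proof. by case: tr => [|[[s z] a] tr]. Qed.

Lemma sum_step (F : step -> R) :
  \sum_(x : step) F x = \sum_(s : state) \sum_(z : obs) \sum_(a : A) F (s, z, a).
Proof.
rewrite pair_bigA /= pair_bigA /=; apply: eq_bigr => [[[s z] a]] _; done.
Qed.

Lemma Fr_ge0 d h tr : (forall s, 0 <= d s) -> 0 <= Fr d h tr.
Proof.
elim: tr d h => [|x tr IH] d h d0 //=.
rewrite run_auxE; apply: mulr_ge0; last by apply: IH => s; case: (htr x.1.1 x.2).
apply: mulr_ge0; [apply: mulr_ge0|]; first exact: d0.
  by case: (hmiss x.1.1).
by case: (hpol h x.1.2).
Qed.

Lemma coef_sum d h : \sum_s d s = 1 ->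
  \sum_(x : step) d x.1.1 * missf m x.1.1 x.1.2 * pol h x.1.2 x.2 = 1.
Proof.
move=> d1; rewrite sum_step /= -d1; apply: eq_bigr => s _.
transitivity (\sum_z d s * missf m s z).
  apply: eq_bigr => z _; rewrite -mulr_sumr.
  by case: (hpol h z) => _ ->; rewrite mulr1.
by rewrite -mulr_sumr; case: (hmiss s) => _ ->; rewrite mulr1.
Qed.

Lemma Fr_mass k d h : \sum_s d s = 1 ->
  \sum_(t : k.-tuple step) Fr d h t = 1.
Proof.
elim: k d h => [|k IH] d h d1; first by rewrite sum_tuple0.
rewrite sum_tuple_cons -(coef_sum h d1); apply: eq_bigr => x _ /=.
under eq_bigr do rewrite run_auxE.
by rewrite -mulr_sumr IH ?mulr1 //; case: (htr x.1.1 x.2).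
Qed.

Lemma Fr_mart k d h (y : step -> R) :
  (forall s h, \sum_z \sum_a missf m s z * pol h z a * y (s, z, a) = 0) ->
  \sum_(t : k.-tuple step) Fr d h t * (\sum_(x <- t) y x) = 0.
Proof.
move=> hy; elim: k d h => [|k IH] d h.
  by rewrite sum_tuple0 big_nil mulr0.
rewrite sum_tuple_cons.
transitivity (\sum_(x : step) d x.1.1 * missf m x.1.1 x.1.2 * pol h x.1.2 x.2 * y x).
  apply: eq_bigr => x _ /=.
  under eq_bigr do rewrite big_cons run_auxE mulrDr.
  set c := d x.1.1 * _ * _.
  have hm := Fr_mass k (rcons h (x.1.2, x.2)) (proj2 (htr x.1.1 x.2)).
  rewrite big_split /= -mulr_suml -mulr_sumr hm.
  under eq_bigr do rewrite -mulrA.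
  by rewrite -mulr_sumr IH !mulr0 addr0 mulr1.
rewrite sum_step big1 // => s _.
transitivity (d s * \sum_z \sum_a missf m s z * pol h z a * y (s, z, a));
  last by rewrite hy mulr0.
rewrite mulr_sumr; apply: eq_bigr => z _.
by rewrite mulr_sumr; apply: eq_bigr => a _ /=; rewrite !mulrA.
Qed.

Lemma Fr_pos d h tr : (forall s, 0 <= d s) -> 0 < Fr d h tr ->
  forall x, x \in tr -> 0 < missf m x.1.1 x.1.2.
Proof.
elim: tr d h => [|x tr IH] d h d0 //= hp y.
move: hp; rewrite run_auxE => hp.
have dm : 0 <= d x.1.1 * missf m x.1.1 x.1.2 by apply: mulr_ge0 => //; case: (hmiss x.1.1).
have dmp : 0 <= d x.1.1 * missf m x.1.1 x.1.2 * pol h x.1.2 x.2.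
  by apply: mulr_ge0 => //; case: (hpol h x.1.2).
have t0 : forall s, 0 <= trans m x.1.1 x.2 s by case: (htr x.1.1 x.2).
have [h1 h2] := mul_gt0_split dmp (Fr_ge0 _ _ t0) hp.
have [h3 _] := mul_gt0_split dm (proj1 (hpol h x.1.2) x.2) h1.
have [_ h5] := mul_gt0_split (d0 _) (proj1 (hmiss x.1.1) x.1.2) h3.
rewrite inE => /orP[/eqP ->|yin] //.
exact: IH h2 y yin.
Qed.
End MDP.
Set Implicit Arguments. Unset Strict Implicit. Unset Printing Implicit Defensive.

Lemma natr_count (R : realType) (T : Type) (P : pred T) (s : seq T) :
  (count P s)%:R = \sum_(x <- s) (P x)%:R :> R.
Proof. by elim: s => [|x s IH]; rewrite ?big_nil ?big_cons //= natrD IH. Qed.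

Lemma count_split (T : Type) (Z : finType) (g : T -> Z) (P : pred T) (Q : pred Z) (s : seq T) :
  (\sum_(z | Q z) count (fun x => P x && (g x == z)) s = count (fun x => P x && Q (g x)) s)%N.
Proof.
elim: s => [|x s IH] /=; first by rewrite big1.
rewrite big_split /= IH; congr (_ + _)%N.
case: (boolP (Q (g x))) => Qx.
  rewrite (bigD1 (g x)) //= eqxx big1 ?addn0 // => z /andP[_ zg].
  by rewrite eq_sym (negbTE zg) andbF.
rewrite andbF big1 // => z Qz; case: eqP => [e|_]; rewrite ?andbF //; move: Qx; by rewrite e Qz.
Qed.

Lemma sum_ge_term (R : realType) (I : finType) (P : pred I) (F : I -> R) i :
  (forall j, P j -> 0 <= F j) -> P i -> F i <= \sum_(j | P j) F j.
Proof.
move=> F0 Pi; rewrite (bigD1 i) //= lerDl; apply: sumr_ge0 => j /andP[Pj _]; exact: F0.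
Qed.

Section Main.
Variables (R : realType) (n : nat) (Sf : 'I_n -> finType) (A : finType).
Variables (m : missMDP R Sf A) (pib : policy R Sf A) (L : nat).
Hypothesis hv : valid_missMDP m.
Hypothesis hmar : simple_MAR m.
Hypothesis hpol : valid_policy pib.
Hypothesis hfair : fair m pib L.

Local Notation step := (step Sf A).
Local Notation state := (state Sf).
Local Notation obs := (obs Sf).
Local Notation pattern := (pattern n).

Let htr : forall s a, is_dist (trans m s a). Proof. by case: hv. Qed.
Let hinit : is_dist (init m). Proof. by case: hv. Qed.
Let hmiss : forall s, is_dist (missf m s). Proof. by case: hv. Qed.
Let hcons : forall s z, 0 < missf m s z -> forall i, z i = None \/ z i = Some (s i).
Proof. by case: hv. Qed.

Definition X := (L.+1).-tuple step.
Definition w (x : X) : R := run_prob m pib x.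

Lemma w0 x : 0 <= w x.
Proof. by rewrite /w run_probE; apply: Fr_ge0 => //; case: hinit. Qed.

Lemma w1 : \sum_x w x = 1.
Proof.
rewrite /w; under eq_bigr do rewrite run_probE.
by apply: Fr_mass => //; case: hinit.
Qed.

Lemma w_pos_miss x st : 0 < w x -> st \in tval x -> 0 < missf m st.1.1 st.1.2.
Proof.
rewrite /w run_probE => hp; apply: (Fr_pos htr hmiss hpol _ hp).
by case: hinit.
Qed.

Lemma miss_ge0 s z : 0 <= missf m s z. Proof. by case: (hmiss s). Qed.
Lemma miss_le1 s z : missf m s z <= 1.
Proof. by case: (hmiss s) => h <-; apply: (sum_ge_term (P := predT)). Qed.

Definition J : {set 'I_n} :=
  [set i | [forall x : X, (0 < w x) ==> all (fun st : step => st.1.2 i != None) x]].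

Definition inC (s s' : state) : bool := [forall i in J, s' i == s i].

Definition pr (s : state) (r : pattern) : R := \sum_(z | fR z == r) missf m s z.

Lemma pr_ge0 s r : 0 <= pr s r.
Proof. by apply: sumr_ge0 => z _; apply: miss_ge0. Qed.
Lemma pr_le1 s r : pr s r <= 1.
Proof.
case: (hmiss s) => h <-; rewrite [X in _ <= X](bigID (fun z => fR z == r)) /= lerDl.
by apply: sumr_ge0 => z _.
Qed.

Lemma Ialways_J : I_always m \subset J.
Proof.
apply/subsetP => i; rewrite inE => /forallP hi; rewrite inE.
apply/forallP => x; apply/implyP => wx; apply/allP => st stx.
apply/negP => /eqP e.
have h : missf m st.1.1 st.1.2 = 0.
  have := @psumr_eq0P _ _ (fun z : obs => z i == None) (missf m st.1.1).
  apply => //; [by move=> z _; apply: miss_ge0 | exact/eqP/hi | by rewrite e].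
by move: (w_pos_miss wx stx); rewrite h ltxx.
Qed.

Lemma pr_C s s' r : inC s s' -> pr s' r = pr s r.
Proof.
move=> /forallP hC; rewrite /pr; apply: esym; apply: hmar => i iI.
have /implyP/(_ (subsetP Ialways_J _ iI))/eqP := hC i; done.
Qed.

Lemma pr_cons s z : consistent s z -> pr s (fR z) = missf m s z.
Proof.
move=> /forallP cz; rewrite /pr (bigD1 z) //= big1 ?addr0 // => z' /andP[/eqP fz zz].
have := miss_ge0 s z'; rewrite le_eqVlt => /orP[/eqP <-//|pz]; exfalso.
move/negP: zz; apply; apply/eqP/ffunP => i.
have := cz i; have := hcons pz i; have := congr1 (fun f : pattern => f i) fz; rewrite !ffunE.
case: (z' i) => [a|]; case: (z i) => [b|] //= _.
  by move=> [//|[->]] /eqP [->].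
Qed.

Lemma miss_incons s z : ~~ consistent s z -> missf m s z = 0.
Proof.
move=> nc; have := miss_ge0 s z; rewrite le_eqVlt => /orP[/eqP <-//|pz].
move/negP: nc; case; apply/forallP => i.
by case: (hcons pz i) => ->; rewrite ?eqxx ?orbT.
Qed.

Definition yz s r (s' : state) (z : obs) : R :=
  (inC s s')%:R * ((fR z == r)%:R - pr s' r).
Definition yA s r (st : step) : R := yz s r st.1.1 st.1.2.
Definition YA s r (x : X) : R := \sum_(st <- tval x) yA s r st.

Lemma sum_ind_pr s' r : \sum_z missf m s' z * (fR z == r)%:R = pr s' r.
Proof.
rewrite /pr [RHS]big_mkcond /=; apply: eq_bigr => z _.
by case: (fR z == r); rewrite ?mulr1 ?mulr0.
Qed.

Lemma YA_mean s r : \sum_x w x * YA s r x = 0.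
Proof.
rewrite /w /YA; under eq_bigr do rewrite run_probE.
apply: (Fr_mart htr hmiss hpol) => s' h.
transitivity (\sum_z missf m s' z * yz s r s' z).
  apply: eq_bigr => z _; rewrite /yA /=.
  under eq_bigr do rewrite mulrAC.
  by rewrite -mulr_sumr; case: (hpol h z) => _ ->; rewrite mulr1.
rewrite /yz.
under eq_bigr do rewrite mulrCA.
rewrite -mulr_sumr.
under eq_bigr do rewrite mulrBr.
by rewrite sumrB sum_ind_pr -mulr_suml (proj2 (hmiss s')) mul1r subrr mulr0.
Qed.

Lemma yz_bound s r s' z : `|yz s r s' z| <= 2.
Proof.
rewrite /yz; have := pr_ge0 s' r; have := pr_le1 s' r.
case: (inC s s'); case: (fR z == r); rewrite ?mul1r ?mul0r ?normr0 //= => h1 h2;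
  rewrite ler_norml; apply/andP; split; lra.
Qed.

Lemma sum_bound (T : Type) (f : T -> R) (c : R) (sq : seq T) :
  (forall x, `|f x| <= c) -> `|\sum_(x <- sq) f x| <= c * (size sq)%:R.
Proof.
move=> hf; elim: sq => [|x sq IH]; first by rewrite big_nil normr0 mulr0.
rewrite big_cons /= -addn1 natrD mulrDr mulr1 addrC.
by apply: le_trans (ler_normD _ _) _; apply: lerD.
Qed.

Lemma YA_bound s r x : `|YA s r x| <= 2 * (L.+1)%:R.
Proof.
have := @sum_bound _ (yA s r) 2 x (fun st => yz_bound s r st.1.1 st.1.2).
by rewrite size_tuple.
Qed.

Lemma YA_eq s r x :
  YA s r x = (count (fun st : step => inC s st.1.1 && (fR st.1.2 == r)) x)%:R
             - pr s r * (count (fun st : step => inC s st.1.1) x)%:R.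
Proof.
rewrite !natr_count mulr_sumr -sumrB /YA; apply: eq_bigr => st _.
rewrite /yA /yz; case: (boolP (inC s st.1.1)) => hC /=.
  by rewrite (pr_C r hC) mul1r mulr1.
by rewrite mul0r mulr0 subrr.
Qed.

Definition qP (P : pred X) : R := \sum_x w x * (P x)%:R.
Definition YP (P : pred X) (x : X) : R := (P x)%:R - qP P.

Lemma qP_ge0 (P : pred X) : 0 <= qP P.
Proof. by apply: sumr_ge0 => x _; apply: mulr_ge0; rewrite ?w0 ?ler0n. Qed.

Lemma qP_le1 (P : pred X) : qP P <= 1.
Proof.
rewrite -w1; apply: ler_sum => x _; have := w0 x.
by case: (P x) => h; rewrite ?mulr1 ?mulr0.
Qed.

Lemma qP_pos (P : pred X) x : P x -> 0 < w x -> 0 < qP P.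
Proof.
move=> Px wx; apply: lt_le_trans (_ : w x * (P x)%:R <= qP P).
  by rewrite Px mulr1.
apply: (sum_ge_term (P := predT)) => // y _; apply: mulr_ge0; [exact: w0 | exact: ler0n].
Qed.

Lemma YP_mean (P : pred X) : \sum_x w x * YP P x = 0.
Proof.
rewrite /YP; under eq_bigr do rewrite mulrBr.
by rewrite sumrB -mulr_suml w1 mul1r subrr.
Qed.

Lemma YP_bound (P : pred X) x : `|YP P x| <= 2.
Proof.
rewrite /YP; have := qP_ge0 P; have := qP_le1 P.
case: (P x) => h1 h2; rewrite /= ?mulr1n ?mulr0n ler_norml; apply/andP; split; lra.
Qed.

Definition visit (s : state) : pred X := fun x => has (fun st : step => st.1.1 == s) x.
Definition missi (i : 'I_n) : pred X := fun x => has (fun st : step => st.1.2 i == None) x.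

Definition Dh k (D : k.-tuple X) := [seq history_of (tval tr) | tr <- tval D].

Lemma count_split1 (T : Type) (Z : finType) (g : T -> Z) (Q : pred Z) (s : seq T) :
  (\sum_(z | Q z) count (fun x => g x == z) s = count (fun x => Q (g x)) s)%N.
Proof. exact: (count_split g predT Q s). Qed.

Lemma cnt_set_eq k (D : k.-tuple X) (P : pred obs) :
  cnt_set (Dh D) P = (\sum_(j < k) count (fun st : step => P st.1.2) (tnth D j))%N.
Proof.
rewrite /cnt_set /cnt_obs /Dh.
under eq_bigr do rewrite sumnE big_map big_map.
rewrite exchange_big /= big_tuple; apply: eq_bigr => j _.
under eq_bigr do rewrite count_map.
exact: (count_split1 (fun st : step => st.1.2) P).
Qed.

Definition bP (P : pred X) : R := if 0 < qP P then qP P / 2 else 1.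
Definition bA (eps : R) s : R := if 0 < qP (visit s) then eps * qP (visit s) / 2 else 1.
Definition badE k (Y : X -> R) (b : R) (D : k.-tuple X) : bool :=
  b * k%:R < `|\sum_(j < k) Y (tnth D j)|.
Definition bad eps k (D : k.-tuple X) : bool :=
  [|| [exists sr : state * pattern, badE (YA sr.1 sr.2) (bA eps sr.1) D],
      [exists s, badE (YP (visit s)) (bP (visit s)) D] |
      [exists i, badE (YP (missi i)) (bP (missi i)) D]].

Lemma bP_gt0 P : 0 < bP P.
Proof. by rewrite /bP; case: ifP => // h; rewrite divr_gt0. Qed.

Lemma bA_gt0 eps s : 0 < eps -> 0 < bA eps s.
Proof. by move=> e0; rewrite /bA; case: ifP => // h; rewrite divr_gt0 ?mulr_gt0. Qed.

Lemma W_pos_each k (D : k.-tuple X) j : 0 < W w D -> 0 < w (tnth D j).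
Proof.
move=> hW; rewrite lt_def w0 andbT; apply/eqP => e.
by move: hW; rewrite /W (bigD1 j) //= e mul0r ltxx.
Qed.

Lemma fair_q s : reachable m s -> 0 < qP (visit s).
Proof.
move=> hr; have := hfair hr; rewrite /qP big_mkcond /=.
congr (0 < _); apply: eq_bigr => x _; rewrite /visit /w.
by case: has; rewrite ?mulr1 ?mulr0.
Qed.

Lemma ratio_bound (a N p e q kk : R) : 0 < q -> 0 < kk -> 0 < e ->
  q * kk / 2 <= N -> `|a - p * N| <= e * q / 2 * kk -> `|a / N - p| <= e.
Proof.
move=> q0 k0 e0 hN ha.
have N0 : 0 < N by apply: lt_le_trans hN; rewrite divr_gt0 ?mulr_gt0.
have -> : a / N - p = (a - p * N) / N by field; rewrite gt_eqF.
rewrite normrM normfV (gtr0_norm N0) ler_pdivrMr //.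
apply: (le_trans ha); have -> : e * q / 2 * kk = e * (q * kk / 2) by field.
by rewrite ler_pM2l.
Qed.

Lemma nbadE k (Y : X -> R) b (D : k.-tuple X) :
  ~~ badE Y b D -> `|\sum_(j < k) Y (tnth D j)| <= b * k%:R.
Proof. by rewrite /badE -leNgt. Qed.

Definition Pred eps k (D : k.-tuple X) : bool :=
  [forall s : state, `[< reachable m s >] ==>
     [forall z : obs, `| Mhat R (Dh D) s z - missf m s z| <= eps]].

Lemma good_D eps k (D : k.-tuple X) : 0 < eps -> (0 < k)%N -> 0 < W w D ->
  ~~ bad eps D -> Pred eps D.
Proof.
move=> e0 k0 hW; rewrite /bad !negb_or => /and3P[/existsPn hA /existsPn hB /existsPn hC].
have hw j : 0 < w (tnth D j) by apply: W_pos_each.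
have kR : 0 < k%:R :> R by rewrite ltr0n.
have hJ j st i : st \in tval (tnth D j) -> i \in J -> st.1.2 i = Some (st.1.1 i).
  move=> stx; rewrite inE => /forallP /(_ (tnth D j)) /implyP /(_ (hw j)) /allP /(_ st stx).
  by case: (hcons (w_pos_miss (hw j) stx) i) => ->.
have hI : Ihat (Dh D) = J.
  apply/setP => i; rewrite !inE cnt_set_eq sum_nat_eq0; apply/idP/idP.
    move=> /forallP hc; apply/negPn/negP => hiJ.
    move: hiJ => /forallPn [x]; rewrite negb_imply => /andP[wx nall].
    have hq : 0 < qP (missi i).
      apply: (qP_pos (x := x)) => //; rewrite /missi -has_predC in nall.
      by move: nall; apply: sub_has => st /=; rewrite negbK.
    have := nbadE (hC i); rewrite /bP hq.
    have -> : \sum_(j < k) YP (missi i) (tnth D j) = - (qP (missi i) * k%:R).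
      transitivity (\sum_(j < k) - qP (missi i)).
        apply: eq_bigr => j _; rewrite /YP /missi has_count.
        by have := hc j; rewrite /= => /eqP ->; rewrite /= sub0r.
      by rewrite sumrN sumr_const card_ord mulr_natr.
    rewrite normrN ger0_norm ?mulr_ge0 ?ler0n ?qP_ge0 //.
    rewrite ler_pM2r //; lra.
  move=> iJ'; have iJ : i \in J by rewrite /J inE. apply/forallP => j /=; rewrite -leqn0 leqNgt -has_count.
  by apply/hasPn => st stx; rewrite (hJ j st i stx iJ).
have hZ s r j st : st \in tval (tnth D j) ->
    Zsr (Dh D) s r st.1.2 = inC s st.1.1 && (fR st.1.2 == r).
  move=> stx; rewrite /Zsr hI.
  apply/forallP/andP => [h | [hc /eqP hr] i].
    split.
      apply/forallP => i; apply/implyP => iJ.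
      have /andP[/implyP/(_ iJ)/eqP e _] := h i.
      by rewrite (hJ j st i stx iJ) in e; case: e => ->.
    apply/eqP/ffunP => i; rewrite ffunE; have /andP[_ /eqP e] := h i.
    by rewrite -e negbK.
  apply/andP; split.
    apply/implyP => iJ; rewrite (hJ j st i stx iJ).
    by have /implyP/(_ iJ)/eqP -> := forallP hc i.
  by rewrite -hr ffunE negbK.
have hcnt s r : cnt_sr (Dh D) s r =
    (\sum_(j < k) count (fun st : step => inC s st.1.1 && (fR st.1.2 == r)) (tnth D j))%N.
  rewrite /cnt_sr cnt_set_eq; apply: eq_bigr => j _; apply: eq_in_count => st stx.
  exact: (hZ s r j st stx).
have htot s : (\sum_(r : pattern) cnt_sr (Dh D) s r =
    \sum_(j < k) count (fun st : step => inC s st.1.1) (tnth D j))%N.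
  under eq_bigr do rewrite hcnt.
  rewrite exchange_big; apply: eq_bigr => j _.
  have := count_split (fun st : step => fR st.1.2) (fun st : step => inC s st.1.1) predT (tnth D j).
  move=> ->; apply: eq_count => st; by rewrite andbT.
apply/forallP => s; apply/implyP => /asboolP hr; apply/forallP => z.
have hq := fair_q hr.
rewrite /Mhat; case: (boolP (consistent s z)) => cz; last first.
  by rewrite miss_incons // subrr normr0 ltW.
rewrite hcnt htot -(pr_cons cz) !natr_sum.
have hAs := nbadE (hA (s, fR z)); rewrite /= /bA hq in hAs.
have hBs := nbadE (hB s); rewrite /bP hq in hBs.
apply: (ratio_bound hq kR e0).
  have heq : \sum_(j < k) YP (visit s) (tnth D j) =
      \sum_(j < k) (visit s (tnth D j))%:R - qP (visit s) * k%:R.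
    by rewrite /YP sumrB sumr_const card_ord mulr_natr.
  apply: le_trans (_ : _ <= \sum_(j < k) (visit s (tnth D j))%:R) _.
    by move: hBs; rewrite heq ler_norml => /andP[h1 _]; lra.
  apply: ler_sum => j _; rewrite ler_nat; case hvs: (visit s (tnth D j)) => //=.
  rewrite -has_count; move: hvs; apply: sub_has => st /eqP ->.
  by apply/forallP => i; apply/implyP.
move: hAs; under eq_bigr do rewrite YA_eq.
by rewrite sumrB -mulr_sumr.
Qed.


Lemma ind_exists (I : finType) (P : pred I) :
  (if [exists i, P i] then 1 else 0 : R) <= \sum_i (if P i then 1 else 0).
Proof.
have h0 : forall i, true -> 0 <= (if P i then 1 else 0 : R) by move=> i _; case: ifP.
case: existsP => [[i Pi]|_]; last exact: sumr_ge0.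
by rewrite (bigD1 i) //= Pi lerDl; apply: sumr_ge0 => j _; case: ifP.
Qed.

Lemma ind_ge0 (I : finType) (P : pred I) : 0 <= \sum_i (if P i then 1 else 0 : R).
Proof. by apply: sumr_ge0 => i _; case: ifP. Qed.

Definition Kc eps : R :=
  \sum_(sr : state * pattern) (2 * (L.+1)%:R) ^+ 2 / (bA eps sr.1) ^+ 2
  + \sum_s 2 ^+ 2 / (bP (visit s)) ^+ 2 + \sum_i 2 ^+ 2 / (bP (missi i)) ^+ 2.

Lemma Kc_ge0 eps : 0 <= Kc eps.
Proof.
by rewrite /Kc; apply: addr_ge0; [apply: addr_ge0|];
  apply: sumr_ge0 => x _; rewrite divr_ge0 ?sqr_ge0.
Qed.

Lemma bad_bound eps k : 0 < eps -> (0 < k)%N ->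
  \sum_(D : k.-tuple X) W w D * (if bad eps D then 1 else 0) <= Kc eps / k%:R.
Proof.
move=> e0 k0.
pose SA (D : k.-tuple X) := \sum_(sr : state * pattern)
   (if badE (YA sr.1 sr.2) (bA eps sr.1) D then 1 else 0 : R).
pose SB (D : k.-tuple X) := \sum_(s : state)
   (if badE (YP (visit s)) (bP (visit s)) D then 1 else 0 : R).
pose SC (D : k.-tuple X) := \sum_(i : 'I_n)
   (if badE (YP (missi i)) (bP (missi i)) D then 1 else 0 : R).
apply: le_trans (_ : _ <= \sum_(D : k.-tuple X) W w D * (SA D + SB D + SC D)) _.
  apply: ler_sum => D _; apply: ler_wpM2l; first exact: (W_ge0 w0).
  have hA := ind_exists (fun sr : state * pattern => badE (YA sr.1 sr.2) (bA eps sr.1) D).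
  have hB := ind_exists (fun s : state => badE (YP (visit s)) (bP (visit s)) D).
  have hC := ind_exists (fun i : 'I_n => badE (YP (missi i)) (bP (missi i)) D).
  have a0 := ind_ge0 (fun sr : state * pattern => badE (YA sr.1 sr.2) (bA eps sr.1) D).
  have b0 := ind_ge0 (fun s : state => badE (YP (visit s)) (bP (visit s)) D).
  have c0 := ind_ge0 (fun i : 'I_n => badE (YP (missi i)) (bP (missi i)) D).
  rewrite /bad /SA /SB /SC.
  move: hA hB hC a0 b0 c0.
  case: [exists _, _]; case: [exists _, _]; case: [exists _, _] => /=; lra.
under eq_bigr do rewrite !mulrDr.
rewrite !big_split /= /Kc !mulrDl.
have hc : forall (Y : X -> R) c b, 0 < b -> \sum_x w x * Y x = 0 ->
    (forall x, `|Y x| <= c) ->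
    \sum_(D : k.-tuple X) W w D * (if badE Y b D then 1 else 0) <= c ^+ 2 / b ^+ 2 / k%:R.
  move=> Y c b b0 hm hb; rewrite -mulrA -invfM; exact: (cheb w0 w1).
apply: lerD; [apply: lerD|]; rewrite mulr_suml; under eq_bigr do rewrite mulr_sumr;
  rewrite exchange_big /=; apply: ler_sum => x _; apply: hc.
- exact: bA_gt0.
- exact: YA_mean.
- by move=> y; have := YA_bound x.1 x.2 y; lra.
- exact: bP_gt0.
- exact: YP_mean.
- exact: YP_bound.
- exact: bP_gt0.
- exact: YP_mean.
- exact: YP_bound.
Qed.

Lemma prob_good_eq eps k : prob_good m pib L k eps =
  \sum_(D : k.-tuple X) W w D * (if Pred eps D then 1 else 0).
Proof.
rewrite /prob_good big_mkcond; apply: eq_bigr => D _; rewrite /Pred.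
by case: ifP; rewrite ?mulr1 ?mulr0.
Qed.

Lemma part1 eps delta : 0 < eps -> 0 < delta < 1 ->
  exists nstar : nat, delta <= prob_good m pib L nstar eps.
Proof.
move=> e0 /andP[d0 d1].
have K0 := Kc_ge0 eps.
have d1' : 0 < 1 - delta by lra.
set k := (Num.bound (Kc eps / (1 - delta))).+1.
exists k.
have k0 : (0 < k)%N by [].
have kR : 0 < k%:R :> R by rewrite ltr0n.
have hk : Kc eps / (1 - delta) < k%:R.
  apply: lt_le_trans (archi_boundP _) _; first by rewrite divr_ge0 // ltW.
  by rewrite ler_nat.
have hK : Kc eps / k%:R <= 1 - delta.
  rewrite ler_pdivrMr //; move: hk; rewrite ltr_pdivrMr // => h.
  by rewrite mulrC ltW.
rewrite prob_good_eq.
apply: (@le_trans _ _ (\sum_(D : k.-tuple X) W w D * (1 - if bad eps D then 1 else 0))).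
  rewrite (eq_bigr (fun D => W w D - W w D * (if bad eps D then 1 else 0))); last first.
    by move=> D _; rewrite mulrBr mulr1.
  rewrite sumrB (sumW w1); have := bad_bound e0 k0; lra.
apply: ler_sum => D _.
case hb: (bad eps D).
  by rewrite subrr mulr0 mulr_ge0 ?(W_ge0 w0) //; case: ifP.
rewrite subr0 mulr1.
have := W_ge0 w0 D; rewrite le_eqVlt => /orP[/eqP <-|hW]; first by rewrite mul0r.
by rewrite (good_D e0 k0 hW) ?hb // mulr1.
Qed.

Lemma Mhat01 k (D : k.-tuple X) s z : 0 <= Mhat R (Dh D) s z <= 1.
Proof.
rewrite /Mhat; case: ifP => _; last by rewrite lexx ler01.
apply/andP; split; first by rewrite divr_ge0 ?ler0n.
set a := cnt_sr _ _ _; set b := (\sum_r _)%N.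
have ab : (a <= b)%N by rewrite /b (bigD1 (fR z)) //= leq_addr.
case: (posnP b) => [->|b0]; first by rewrite invr0 mulr0 ler01.
by rewrite ler_pdivrMr ?ltr0n // mul1r ler_nat.
Qed.

Lemma part2 k delta : 0 < delta < 1 ->
  exists eps : R, 0 < eps /\ delta <= prob_good m pib L k eps.
Proof.
move=> /andP[d0 d1]; exists 2; split => //.
rewrite prob_good_eq (eq_bigr (fun D => W w D)) ?(sumW w1) ?ltW //.
move=> D _; rewrite /Pred.
have -> : [forall s : state, `[< reachable m s >] ==>
     [forall z : obs, `| Mhat R (Dh D) s z - missf m s z| <= 2]].
  apply/forallP => s; apply/implyP => _; apply/forallP => z.
  have /andP[h1 h2] := Mhat01 D s z.
  have h3 := miss_ge0 s z; have h4 := miss_le1 s z.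
  rewrite ler_norml; apply/andP; split; lra.
by rewrite mulr1.
Qed.

End Main.

Theorem theorem1 (R : realType) (n : nat) (Sf : 'I_n -> finType) (A : finType)
    (m : missMDP R Sf A) (pib : policy R Sf A) (L : nat) :
  valid_missMDP m -> simple_MAR m -> valid_policy pib -> fair m pib L ->
  (forall eps delta : R, 0 < eps -> 0 < delta < 1 ->
     exists nstar : nat, delta <= prob_good m pib L nstar eps) /\
  (forall (k : nat) (delta : R), 0 < delta < 1 ->
     exists eps : R, 0 < eps /\ delta <= prob_good m pib L k eps).
Proof.
move=> hv hmar hpol hfair; split.
  by move=> eps delta; apply: part1.
by move=> k delta; apply: part2.
Qed.
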